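(* Let $\mathcal{H}$ be the space of real or complex $m\times n$ matrices with Frobenius inner product, $r\ge2$, and $\Sigma=\Sigma_r$ the set of matrices of rank at most $r$. Then uniform recovery of $\Sigma_r$ with the regularizer $\|\cdot\|_\Sigma$ is impossible: the descent set $\mathcal{T}_{\|\cdot\|_\Sigma}(\Sigma)$ equals $\mathcal{E}(\Sigma)$, so that for every linear operator $M$ on $\mathcal{H}$ with nontrivial null space there exists $x_0\in\Sigma_r$ which is not the unique minimizer of $\min_x\|x\|_\Sigma$ subject to $Mx=Mx_0$.
   Context: $\|\cdot\|_\Sigma$ is the atomic norm with atoms $\Sigma\cap S(1)$ ($S(1)$ the unit Frobenius sphere): $\|x\|_\Sigma=\inf\{t\ge0:x\in t\cdot\overline{\mathrm{conv}}(\Sigma\cap S(1))\}$, $+\infty$ if none; $\mathcal{E}(\Sigma)=\{x:\|x\|_\Sigma<\infty\}$. Descent set: $\mathcal{T}_f(\Sigma)=\bigcup_{x\in\Sigma}\{z:f(x+z)\le f(x)\}$. *)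

(* Defs.v *)
From HB Require Import structures.
From mathcomp Require Import all_boot all_order all_algebra.
From mathcomp Require Import all_classical all_reals all_analysis.
From mathcomp Require Import complex.
Set Implicit Arguments. Unset Strict Implicit. Unset Printing Implicit Defensive.
Import Order.TTheory GRing.Theory Num.Theory.
Import numFieldNormedType.Exports.
Local Open Scope classical_set_scope.
Local Open Scope ring_scope.

Definition frob2 (K : numFieldType) (m n : nat) (A : 'M[K]_(m, n)) : K :=
  \sum_(i < m) \sum_(j < n) `|A i j| ^+ 2.

Definition unit_sphere (K : numFieldType) (m n : nat) : set 'M[K]_(m, n) :=
  [set A | frob2 A = 1].

Definition Sigma_r (K : numFieldType) (m n r : nat) : set 'M[K]_(m, n) :=
  [set A | (\rank A <= r)%N].

Definition conv_hull (K : numFieldType) (m n : nat) (S : set 'M[K]_(m, n))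
  : set 'M[K]_(m, n) :=
  [set x | exists (k : nat) (w : 'I_k -> K) (a : 'I_k -> 'M[K]_(m, n)),
      (forall i, 0 <= w i) /\ \sum_(i < k) w i = 1 /\
      (forall i, S (a i)) /\ x = \sum_(i < k) w i *: a i].

Definition cl_conv (K : numFieldType) (m n : nat) (S : set 'M[K]_(m, n))
  : set 'M[K]_(m, n) := closure (conv_hull S).

(* atomic norm ||x||_Sigma = inf {t >= 0 : x \in t * clconv(Sigma \cap S(1))},
   +oo if no such t.  Real scalars t : R are mapped into K by emb. *)
Definition atomic_norm (R : realType) (K : numFieldType) (emb : R -> K)
  (m n : nat) (Sigma : set 'M[K]_(m, n)) (x : 'M[K]_(m, n)) : \bar R :=
  ereal_inf [set (t%:E)%E | t in
    [set t : R | 0 <= t /\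
       exists c, cl_conv (Sigma `&` @unit_sphere K m n) c /\ x = emb t *: c]].

Definition E_set (R : realType) (K : numFieldType) (emb : R -> K)
  (m n : nat) (Sigma : set 'M[K]_(m, n)) : set 'M[K]_(m, n) :=
  [set x | (atomic_norm emb Sigma x < +oo)%E].

Definition descent_set (R : realType) (m n : nat) (K : numFieldType)
  (f : 'M[K]_(m, n) -> \bar R) (Sigma : set 'M[K]_(m, n)) : set 'M[K]_(m, n) :=
  \bigcup_(x in Sigma) [set z | (f (x + z)%R <= f x)%E].

Definition unique_minimizer (R : realType) (K : numFieldType) (m n : nat)
  (V : lmodType K) (M : 'M[K]_(m, n) -> V)
  (f : 'M[K]_(m, n) -> \bar R) (x0 : 'M[K]_(m, n)) : Prop :=
  (forall x, M x = M x0 -> (f x0 <= f x)%E) /\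
  (forall x, M x = M x0 -> (f x <= f x0)%E -> x = x0).

Definition prop8_conclusion (R : realType) (K : numFieldType) (emb : R -> K)
  (m n r : nat) : Prop :=
  descent_set (atomic_norm emb (@Sigma_r K m n r)) (@Sigma_r K m n r)
    = E_set emb (@Sigma_r K m n r)
  /\
  (forall (V : lmodType K) (M : {linear 'M[K]_(m, n) -> V}),
     (exists z : 'M[K]_(m, n), z != 0 /\ M z = 0) ->
     exists x0, @Sigma_r K m n r x0 /\
       ~ unique_minimizer M (atomic_norm emb (@Sigma_r K m n r)) x0).

(* Main.v *)
Require Import Defs.
From HB Require Import structures.
From mathcomp Require Import all_boot all_order all_algebra.
From mathcomp Require Import all_classical all_reals all_analysis.
From mathcomp Require Import complex.
From mathcomp Require Import ring lra.
Import Order.TTheory GRing.Theory Num.Theory.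
Import numFieldNormedType.Exports.
Local Open Scope ring_scope.

Section Gen.
Variables (R : realType) (K : numFieldType) (emb : R -> K) (nr : K -> R).
Hypothesis embD : forall s t, emb (s + t) = emb s + emb t.
Hypothesis embM : forall s t, emb (s * t) = emb s * emb t.
Hypothesis emb1 : emb 1 = 1.
Hypothesis emb_le : forall s t, (emb s <= emb t) = (s <= t).
Hypothesis nrE : forall x, `|x| = emb (nr x).

Lemma emb0 : emb 0 = 0.
Proof. by apply/(addrI (emb 0)); rewrite -embD !addr0. Qed.
Lemma emb_inj : injective emb.
Proof. by move=> s t H; apply/le_anti; rewrite -!emb_le H lexx. Qed.
Lemma emb_ge0 t : (0 <= emb t) = (0 <= t).
Proof. by rewrite -emb0 emb_le. Qed.
Lemma emb_gt0 t : (0 < emb t) = (0 < t).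
Proof. by rewrite !lt_def -emb0 (inj_eq emb_inj) emb_le. Qed.
Lemma emb_neq0 t : (emb t != 0) = (t != 0).
Proof. by rewrite -emb0 (inj_eq emb_inj). Qed.
Lemma embV t : emb (t^-1) = (emb t)^-1.
Proof.
have [->|t0] := eqVneq t 0; first by rewrite invr0 emb0 invr0.
have e0 : emb t != 0 by rewrite emb_neq0.
by rewrite -[LHS](mulKf e0) -embM mulfV // emb1 mulr1.
Qed.
Lemma embMn t k : emb (t *+ k) = emb t *+ k.
Proof. by elim: k => [|k IH]; rewrite ?mulr0n ?emb0 // !mulrS embD IH. Qed.
Lemma nr_ge0 x : 0 <= nr x.
Proof. by rewrite -emb_ge0 -nrE. Qed.
Lemma nr_emb t : 0 <= t -> nr (emb t) = t.
Proof. by move=> t0; apply: emb_inj; rewrite -nrE ger0_norm // emb_ge0. Qed.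
Lemma nrM x y : nr (x * y) = nr x * nr y.
Proof. by apply: emb_inj; rewrite embM -!nrE normrM. Qed.
Lemma nrN x : nr (- x) = nr x.
Proof. by apply: emb_inj; rewrite -!nrE normrN. Qed.
Lemma nrV x : nr (x^-1) = (nr x)^-1.
Proof. by apply: emb_inj; rewrite embV -!nrE normfV. Qed.
Lemma nr0 : nr 0 = 0.
Proof. by rewrite -emb0 nr_emb. Qed.
Lemma nr_eq0 x : (nr x == 0) = (x == 0).
Proof. by rewrite -(inj_eq emb_inj) -nrE emb0 normr_eq0. Qed.
Lemma nr1 : nr 1 = 1.
Proof. by rewrite -emb1 nr_emb. Qed.

Lemma emb_sum (I : finType) (g : I -> R) :
  emb (\sum_i g i) = \sum_i emb (g i).
Proof. exact: (big_morph emb embD emb0). Qed.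

Variables (m n r : nat).
Hypothesis r2 : (2 <= r)%N.
Local Notation M := 'M[K]_(m, n).
Local Notation A := (@Sigma_r K m n r `&` @unit_sphere K m n)%classic.
Local Notation f := (atomic_norm emb (@Sigma_r K m n r)).

Lemma frobE (X : M) : frob2 X = emb (\sum_i \sum_j nr (X i j) ^+ 2).
Proof.
rewrite /frob2 emb_sum; apply: eq_bigr => i _; rewrite emb_sum.
by apply: eq_bigr => j _; rewrite nrE expr2 embM -expr2.
Qed.

Lemma entry_le1 (a : M) i j : @unit_sphere K m n a -> `|a i j| <= 1.
Proof.
rewrite /unit_sphere /= /frob2 => H.
rewrite -(@expr_le1 _ 2) // -H (bigD1 i) //= (bigD1 j) //= -addrA lerDl.
apply: addr_ge0; first by apply: sumr_ge0 => k _; rewrite exprn_ge0.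
by apply: sumr_ge0 => k _; apply: sumr_ge0 => l _; rewrite exprn_ge0.
Qed.

Lemma conv_entry (c : M) i j : conv_hull A c -> `|c i j| <= 1.
Proof.
move=> [k [w [a [w0 [w1 [Aa ->]]]]]].
rewrite summxE (le_trans (ler_norm_sum _ _ _)) // -w1 ler_sum // => l _.
rewrite mxE normrM ger0_norm // ler_piMr //.
by case: (Aa l) => _ /entry_le1; apply.
Qed.

Lemma cl_entry (c : M) i j : cl_conv A c -> `|c i j| <= 1.
Proof.
move=> Hc; apply/ler_addgt0Pr => e e0.
have [d [Cd Bd]] := Hc _ (@nbhsx_ballx _ _ c e e0).
move: Bd; rewrite /ball /= => -[_ /(_ i j)]; rewrite /ball /= => H.
have -> : c i j = d i j + (c i j - d i j) by rewrite addrC subrK.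
apply: (le_trans (ler_normD _ _)); apply: lerD; first exact: conv_entry.
exact: ltW.
Qed.

Lemma LB (x : M) i j : ((nr (x i j))%:E <= f x)%E.
Proof.
apply/ereal_infP => _ [t [t0 [c [Cc ->]]] <-]; rewrite lee_fin mxE nrM.
rewrite nr_emb // ler_piMr // -(emb_le) emb1 -nrE; exact: cl_entry.
Qed.

Lemma UB (x : M) T c : 0 <= T -> cl_conv A c -> x = emb T *: c -> (f x <= T%:E)%E.
Proof. by move=> T0 Cc xE; apply: ereal_inf_lbound; exists T => //; split => //; exists c. Qed.

Lemma AN (e : M) : A e -> A (- e).
Proof.
move=> [Se Ue]; split.
  by rewrite /Sigma_r /= -scaleN1r mxrank_scale_nz ?oppr_eq0 ?oner_eq0.
rewrite /unit_sphere /= -Ue /frob2; apply: eq_bigr => i _; apply: eq_bigr => j _.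
by rewrite mxE normrN.
Qed.

Lemma pad (k : nat) (rho : nat -> R) (b : nat -> M) T e :
  A e -> 0 < T -> (forall i, 0 <= rho i) -> (forall i, (i < k)%N -> A (b i)) ->
  \sum_(i < k) rho i <= T ->
  (f (\sum_(i < k) emb (rho i) *: b i) <= T%:E)%E.
Proof.
move=> Ae T0 r0 Ab HS.
set S := \sum_(i < k) rho i.
set d := (1 - S / T) / 2.
have d0 : 0 <= d.
  rewrite /d divr_ge0 // subr_ge0 ler_pdivrMr // mul1r //.
pose W i := if (i < k)%N then emb (rho i / T) else emb d.
pose B i := if (i < k)%N then b i else if i == k then e else - e.
have T0' : T != 0 by rewrite gt_eqF.
apply: (@UB _ _ (\sum_(i < k.+2) W i *: B i) (ltW T0)).
- apply: subset_closure; exists k.+2, (fun i => W i), (fun i => B i).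
  split; [|split; [|split]].
  + move=> i; rewrite /W; case: ifP => _; rewrite emb_ge0 //.
    exact: divr_ge0 (r0 _) (ltW T0).
    rewrite 2!big_ord_recr /= /W ltnn.
    have -> : (k.+1 < k)%N = false by rewrite ltnNge ltnW.
    rewrite (eq_bigr (fun i : 'I_k => emb (rho i / T))); last first.
      by move=> i _; rewrite ltn_ord.
    rewrite -emb_sum -!embD -emb1.
    congr emb.
    rewrite -mulr_suml -/S /d; set u := S / T; lra.
  + move=> i; rewrite /B; case: ifP => [/Ab //|_].
    case: ifP => _ //; exact: AN.
  + by [].
- rewrite scaler_sumr 2!big_ord_recr /= /W /B ltnn eqxx /=.
  have -> : (k.+1 < k)%N = false by rewrite ltnNge ltnW.
  rewrite (gtn_eqF (ltnSn k)) !scalerA -!embM scalerN addrK.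
  apply: eq_bigr => i _; rewrite ltn_ord.
  by rewrite scalerA -embM [T * _]mulrC divfK.
Qed.

Lemma sum_nth (I : finType) (i0 : I) (V : nmodType) (F : I -> V) :
  \sum_q F q = \sum_(i < #|I|) F (nth i0 (enum I) i).
Proof.
rewrite (big_enum_val (A := predT)) /=; apply: eq_bigr => i _.
by rewrite (enum_val_nth i0).
Qed.

Lemma pad_fin (I : finType) (i0 : I) (rho : I -> R) (b : I -> M) T e :
  A e -> 0 < T -> (forall q, 0 <= rho q) -> (forall q, A (b q)) ->
  \sum_q rho q <= T ->
  (f (\sum_q emb (rho q) *: b q) <= T%:E)%E.
Proof.
move=> Ae T0 r0 Ab HS; rewrite (sum_nth _ i0).
apply: (@pad _ (fun i => rho (nth i0 (enum I) i)) (fun i => b (nth i0 (enum I) i)) _ e) => //.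
by rewrite -(sum_nth _ i0 _ (fun q => rho q)).
Qed.

Definition Ed (p : 'I_m * 'I_n) : M := delta_mx p.1 p.2.

Lemma sum_ifeq (I : finType) (p : I) (c : R) :
  \sum_(x : I) (if x == p then c else 0) = c.
Proof. by rewrite (bigD1 p) //= eqxx big1 ?addr0 // => x /negbTE ->. Qed.

Lemma two_entry (p q : 'I_m * 'I_n) u v : (q = p -> v = 0) ->
  \sum_i \sum_j nr ((u *: Ed p + v *: Ed q) i j) ^+ 2 = nr u ^+ 2 + nr v ^+ 2.
Proof.
move=> Hv; rewrite pair_bigA /=.
rewrite (eq_bigr (fun x => (if x == p then nr u ^+ 2 else 0) +
                           (if x == q then nr v ^+ 2 else 0))).
  by rewrite big_split /= !sum_ifeq.
case=> i j _ /=; rewrite !mxE.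
case: p Hv => p1 p2; case: q => q1 q2 Hv /=.
have E1 : ((i == p1) && (j == p2)) = ((i, j) == (p1, p2)) by [].
have E2 : ((i == q1) && (j == q2)) = ((i, j) == (q1, q2)) by [].
rewrite E1 E2.
have [ep|np] := eqVneq (i, j) (p1, p2); have [eq|nq] := eqVneq (i, j) (q1, q2).
- rewrite Hv; last by rewrite -eq -ep.
  by rewrite !mulr1 addr0 nr0 expr0n /= addr0.
- by rewrite mulr1 mulr0 addr0 addr0.
- by rewrite mulr1 mulr0 add0r add0r.
- by rewrite !mulr0 addr0 nr0 expr0n /= addr0.
Qed.

Lemma atomP (P : M) (rho : R) : (\rank P <= r)%N -> 0 < rho ->
  rho ^+ 2 = \sum_i \sum_j nr (P i j) ^+ 2 -> A (emb rho^-1 *: P).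
Proof.
move=> rP r0 HP; split.
  by rewrite /Sigma_r /=; apply: leq_trans (mxrank_scale _ _) rP.
rewrite /unit_sphere /= frobE -emb1; congr emb.
rewrite (eq_bigr (fun i => rho^-1 ^+ 2 * \sum_j nr (P i j) ^+ 2)).
  by rewrite -mulr_sumr -HP mulrC -exprMn mulfV ?expr1n // gt_eqF.
move=> i _; rewrite mulr_sumr; apply: eq_bigr => j _.
by rewrite mxE nrM nr_emb ?invr_ge0 ?ltW // exprMn.
Qed.

Lemma Ed_atom p : A (Ed p).
Proof.
split; first by rewrite /Sigma_r /= mxrank_delta ltnW.
rewrite /unit_sphere /= frobE -emb1; congr emb.
have -> : Ed p = 1 *: Ed p + 0 *: Ed p by rewrite scale1r scale0r addr0.
by rewrite two_entry // nr1 nr0 expr0n /= addr0 expr1n.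
Qed.

Lemma xsum (x : M) : x = \sum_q x q.1 q.2 *: Ed q.
Proof. by rewrite {1}(matrix_sum_delta x) pair_bigA. Qed.

Lemma Efin (p0 : 'I_m * 'I_n) (x : M) : (f x < +oo)%E.
Proof.
pose b q := if x q.1 q.2 == 0 then Ed p0
            else emb (nr (x q.1 q.2))^-1 *: (x q.1 q.2 *: Ed q).
have -> : x = \sum_q emb (nr (x q.1 q.2)) *: b q.
  rewrite {1}(xsum x); apply: eq_bigr => q _; rewrite /b.
  case: eqP => [->|nz]; first by rewrite nr0 emb0 !scale0r.
  rewrite scalerA -embM mulfV ?emb1 ?scale1r // nr_eq0; exact/eqP.
have S0 : 0 <= \sum_q nr (x q.1 q.2) by apply: sumr_ge0 => q _; exact: nr_ge0.
apply: (le_lt_trans (@pad_fin _ p0 _ _ (\sum_q nr (x q.1 q.2) + 1) (Ed p0) _ _ _ _ _)) (ltry _).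
- exact: Ed_atom.
- lra.
- by move=> q; exact: nr_ge0.
- move=> q; rewrite /b; case: eqP => [_|nz]; first exact: Ed_atom.
  apply: atomP.
  + by apply: leq_trans (mxrank_scale _ _) _; rewrite mxrank_delta ltnW.
  + by rewrite lt_def nr_eq0 nr_ge0 andbT; apply/eqP.
  + have := two_entry q q (x q.1 q.2) 0 (fun _ => erefl).
    by rewrite scale0r addr0 nr0 expr0n /= addr0 => ->.
- lra.
Qed.

Lemma main (z : M) : exists x, @Sigma_r K m n r x /\ (f (x + z) <= f x)%E.
Proof.
have [->|z0] := eqVneq z 0.
  exists 0; split; first by rewrite /Sigma_r /= mxrank0.
  by rewrite addr0.
have [p zp] : exists p : 'I_m * 'I_n, z p.1 p.2 != 0.
  apply: contrapT => H; move/eqP: z0; apply; apply/matrixP => i j; rewrite mxE.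
  by apply/eqP; apply: contrapT => nz; apply: H; exists (i, j); apply/negP.
set zeta := z p.1 p.2.
set mu := nr zeta.
have mu0 : 0 < mu by rewrite lt_def nr_eq0 zp nr_ge0.
have emu0 : emb mu != 0 by rewrite emb_neq0 gt_eqF.
set om := zeta / emb mu.
have nom : nr om = 1 by rewrite /om nrM nrV nr_emb ?ltW // mulfV ?gt_eqF.
have hom : emb mu * om = zeta by rewrite /om mulrC divfK.
set N := #|{: 'I_m * 'I_n}|.
have N0 : (0 < N)%N by apply/card_gt0P; exists p.
set NR : R := N%:R.
have NR0 : 0 < NR by rewrite /NR ltr0n.
set S := \sum_q nr (z q.1 q.2) ^+ 2.
have S0 : 0 <= S by apply: sumr_ge0 => q _; rewrite exprn_ge0 ?nr_ge0.
set y := NR ^+ 2 * S / (2 * mu).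
have y0 : 0 <= y by rewrite /y; apply: divr_ge0; [apply: mulr_ge0; [apply: exprn_ge0; apply: ltW|] | apply: mulr_ge0; [|apply: ltW]].
have hy : y * (2 * mu) = NR ^+ 2 * S by rewrite /y divfK // gt_eqF // mulr_gt0.
set a := y + 1.
have a0 : 0 < a by rewrite /a; lra.
set s := a + mu.
have s0 : 0 < s by rewrite /s; lra.
pose u := - (emb (a / NR) * om).
pose v (q : 'I_m * 'I_n) := if q == p then 0 else z q.1 q.2.
pose piece q := u *: Ed p + v q *: Ed q.
pose rho q := Num.sqrt ((a / NR) ^+ 2 + nr (v q) ^+ 2).
have aN0 : 0 < (a / NR) ^+ 2 by rewrite exprn_gt0 // divr_gt0.
have rho0 : forall q, 0 < rho q.
  move=> q; rewrite /rho sqrtr_gt0.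
  have := exprn_ge0 2 (nr_ge0 (v q)); lra.
exists (- (emb s * om) *: Ed p); split.
  by rewrite /Sigma_r /=; apply: leq_trans (mxrank_scale _ _) _; rewrite mxrank_delta ltnW.
have LBx : (s%:E <= f (- (emb s * om) *: Ed p))%E.
  have := LB (- (emb s * om) *: Ed p) p.1 p.2.
  by rewrite !mxE !eqxx /= mulr1 nrN nrM nom mulr1 nr_emb // ltW.
apply: le_trans LBx.
have sumE : - (emb s * om) *: Ed p + z =
    \sum_q emb (rho q) *: (emb (rho q)^-1 *: piece q).
  rewrite (eq_bigr piece); last first.
    by move=> q _; rewrite scalerA -embM mulfV ?gt_eqF // emb1 scale1r.
  rewrite /piece big_split /=.
  have -> : \sum_(q : 'I_m * 'I_n) u *: Ed p = (u *+ N) *: Ed p.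
    by rewrite sumr_const scalerMnl.
  have -> : \sum_(q : 'I_m * 'I_n) v q *: Ed q = z - zeta *: Ed p.
    rewrite [in RHS](xsum z) [in RHS](bigD1 p) //= (bigD1 p) //= /v eqxx.
    rewrite scale0r add0r -/zeta addrC addrK; apply: eq_bigr => q /negbTE qp.
    by rewrite qp.
  rewrite /u mulNrn -mulrnAl -embMn -mulr_natr divfK ?gt_eqF //.
  rewrite /s embD mulrDl hom opprD scalerDl -addrA; congr (_ + _).
  by rewrite addrC scaleNr.
rewrite sumE.
apply: (@pad_fin _ p rho _ s (Ed p)).
- exact: Ed_atom.
- exact: s0.
- by move=> q; apply: ltW.
- move=> q; apply: atomP => //.
  + rewrite /piece; apply: leq_trans (mxrank_add _ _) _.
    apply: leq_trans r2; rewrite -[2%N]/(1 + 1)%N; apply: leq_add.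
    * by apply: leq_trans (mxrank_scale _ _) _; rewrite mxrank_delta.
    * by apply: leq_trans (mxrank_scale _ _) _; rewrite mxrank_delta.
  + rewrite /rho sqr_sqrtr; last by have := exprn_ge0 2 (nr_ge0 (v q)); lra.
    rewrite /piece two_entry; last by move=> ->; rewrite /v eqxx.
    by rewrite /u nrN nrM nom mulr1 nr_emb // divr_ge0 // ltW.
- have bound : forall q, rho q <= s / NR.
    move=> q.
    have vS : nr (v q) ^+ 2 <= S.
      rewrite /v; case: ifP => _; first by rewrite nr0 expr0n.
      by rewrite /S (bigD1 q) //= lerDl sumr_ge0 // => q' _; rewrite exprn_ge0 ?nr_ge0.
    rewrite /rho -(@ger0_norm _ (s / NR)); last by rewrite divr_ge0 // ltW.
    rewrite -sqrtr_sqr; apply: ler_wsqrtr.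
    have haN : a / NR * NR = a by rewrite divfK // gt_eqF.
    have hmN : mu / NR * NR = mu by rewrite divfK // gt_eqF.
    have -> : s / NR = a / NR + mu / NR by rewrite /s mulrDl.
    move: haN hmN vS; set aN := a / NR; set mN := mu / NR => haN hmN vS.
    have key : NR ^+ 2 * S <= NR ^+ 2 * (2 * aN * mN + mN ^+ 2).
      have -> : NR ^+ 2 * (2 * aN * mN + mN ^+ 2) =
        2 * (aN * NR) * (mN * NR) + (mN * NR) ^+ 2 by ring.
      rewrite haN hmN /a.
      have : 0 <= 2 * mu + mu ^+ 2 by rewrite addr_ge0 ?mulr_ge0 ?exprn_ge0 ?ltW.
      nra.
    rewrite ler_pM2l ?exprn_gt0 // in key.
    nra.
  apply: le_trans (ler_sum _ (fun q _ => bound q)) _.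
  by rewrite sumr_const -/N -mulr_natr divfK ?gt_eqF.
Qed.

Lemma concl (p0 : 'I_m * 'I_n) : prop8_conclusion emb m n r.
Proof.
split.
  apply/seteqP; split => z _.
    by rewrite /E_set /=; exact: Efin.
  have [x [Sx Hx]] := main z; by exists x.
move=> V L [z [z0 Lz]].
have [x [Sx Hx]] := main z; exists x; split => //.
move=> [_ U]; have := U (x + z).
rewrite linearD Lz addr0 => /(_ erefl Hx) /eqP.
rewrite -{2}(addr0 x) => /eqP /addrI zE; by rewrite zE eqxx in z0.
Qed.

End Gen.

Theorem proposition8 (R : realType) (m n r : nat) :
  (0 < m)%N -> (0 < n)%N -> (2 <= r)%N ->
  prop8_conclusion (fun t : R => t) m n r /\
  prop8_conclusion (fun t : R => ((t%:C)%C : R[i])) m n r.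
Proof.
move=> m0 n0 r2; have p0 : 'I_m * 'I_n := (Ordinal m0, Ordinal n0).
split.
  apply: (@concl R R (fun t => t) (fun x => `|x|)) => //.
apply: (@concl R R[i] (fun t => (t%:C)%C) (fun z => Num.sqrt (complex.Re z ^+ 2 + complex.Im z ^+ 2))) => //.
- by move=> s t; rewrite rmorphD.
- by move=> s t; rewrite rmorphM.
- by move=> s t; rewrite lecR.
- by move=> x; rewrite normc_def.
Qed.
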